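(* Let $\Lambda\subseteq\mathbb{R}^d$ be a $d$-dimensional lattice with given matrix of basis vectors $U$, let $F\colon K\to\mathbb{R}$ be a $\Lambda$-periodic filter on a $\Lambda$-periodic cell complex $K$, let $m$ be the number of edges in $K/\Lambda$, and let $D$ be the maximum magnitude of their shift vectors. For every point $\Gamma$ of the periodic merge tree $\mathcal{M}(F,\Lambda)$, let $V$ be the Hermite normal form of the lattice $U^{-1}(\Lambda_\Gamma)\subseteq\mathbb{Z}^d$. Then the basis $UV$ of the periodicity lattice $\Lambda_\Gamma$ satisfies $\|V\|_\infty\le(\sqrt{d}\,Dm)^d$.
   Context: A cell complex $K$ in $\mathbb{R}^d$ is a locally finite collection of cells (each homeomorphic to a closed ball, boundaries unions of lower-dimensional cells, intersections unions of shared faces); $0$-cells are vertices, $1$-cells edges. $K$ is $\Lambda$-periodic if $\sigma+u\in K$ for $u\in\Lambda$; a filter $F$ satisfies $F(\sigma)\le F(\tau)$ for faces $\sigma$ of $\tau$ and is $\Lambda$-periodic if $F(\sigma+u)=F(\sigma)$; $K/\Lambda$ is the finite quotient complex on the torus $\mathbb{R}^d/\Lambda$, $F/\Lambda$ the quotient filter. The periodic merge tree $\mathcal{M}(F,\Lambda)$ is the merge tree of $F/\Lambda$, whose points are the connected components $\Gamma$ of the sublevel sets $(K/\Lambda)_t=(F/\Lambda)^{-1}(-\infty,t]$ (each recorded with its height $t$). For such $\Gamma$, with $\phi\colon\mathbb{R}^d\to\mathbb{R}^d/\Lambda$ the projection, a shadow is a connected component of $\phi^{-1}(\Gamma)$,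 and the periodicity lattice is $\Lambda_\Gamma=\{u\in\Lambda:\gamma+u=\gamma\}$ for some (equivalently every) shadow $\gamma$. Shift vectors: with $u_1,\dots,u_d$ the columns of $U$, for an edge of $K/\Lambda$ oriented from $x$ to $y$ let $x_0,y_0$ be the lifts of $x,y$ in the unit cell $\{\sum c_iu_i: c_i\in[0,1)\}$; a lift of the edge in $K$ has endpoints $x_0+u,y_0+w$ with $u,w\in\Lambda$, and the shift vector is $U^{-1}(w-u)\in\mathbb{Z}^d$. The magnitude $\|\cdot\|_\infty$ of an integer vector or matrix is its maximum absolute entry. The Hermite normal form of a lattice $L\subseteq\mathbb{Z}^d$ is the unique integer matrix whose columns form a basis of $L$ such that each column has strictly more leading zeros than the preceding one, the first non-zero (pivot) entry of each column is positive, and in each pivot's row all entries to the left of the pivot are non-negative and smaller than the pivot. *)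

(* Defs.v *)
From HB Require Import structures.
From mathcomp Require Import all_boot all_order all_algebra.
From mathcomp Require Import reals.
From Stdlib Require Import Relations.
Set Implicit Arguments. Unset Strict Implicit. Unset Printing Implicit Defensive.
Import Order.TTheory GRing.Theory Num.Theory.
Local Open Scope ring_scope.

(* ------------------------------------------------------------------------
   Combinatorial data of a Lambda-periodic cell complex K, expressed in the
   integer coordinates given by the lattice basis U (so Lambda ~ Z^d):
   - quotient vertices  : 'I_n   (the 0-cells of K/Lambda)
   - quotient edges     : 'I_m   (the 1-cells of K/Lambda), edge e oriented
                           from [src e] to [tgt e] with shift vector
                           [shift e] in Z^d (the column U^{-1}(w-u)).
   - the quotient filter F/Lambda on vertices [Fv] and edges [Fe].
   A vertex of K is a pair (x, a) : 'I_n * Z^d, standing for x_0 + U a;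
   the lifts of edge e are the edges (src e, a) -- (tgt e, a + shift e).
   ------------------------------------------------------------------------ *)

Section PeriodicGraph.
Variables (R : realType) (d n m : nat).
Variables (src tgt : 'I_m -> 'I_n) (shift : 'I_m -> 'cV[int]_d).
Variables (Fv : 'I_n -> R) (Fe : 'I_m -> R).

Definition qadj (t : R) (x y : 'I_n) : Prop :=
  exists e : 'I_m, Fe e <= t /\
    ((src e = x /\ tgt e = y) \/ (src e = y /\ tgt e = x)).

(* the connected component Gamma of (K/Lambda)_t containing the vertex x0
   (as its set of vertices; x0 is assumed to lie in the sublevel set) *)
Definition qcomp (t : R) (x0 : 'I_n) : 'I_n -> Prop :=
  fun y => clos_refl_trans _ (qadj t) x0 y.

Definition ladj (t : R) (x0 : 'I_n) (p q : 'I_n * 'cV[int]_d) : Prop :=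
  qcomp t x0 p.1 /\ qcomp t x0 q.1 /\
  exists e : 'I_m, Fe e <= t /\
    ((src e = p.1 /\ tgt e = q.1 /\ q.2 = p.2 + shift e) \/
     (src e = q.1 /\ tgt e = p.1 /\ p.2 = q.2 + shift e)).

Definition shadow (t : R) (x0 : 'I_n) (a0 : 'cV[int]_d)
  : 'I_n * 'cV[int]_d -> Prop :=
  fun q => clos_refl_trans _ (ladj t x0) (x0, a0) q.

(* U^{-1}(Lambda_Gamma) = { u in Z^d : gamma + u = gamma } *)
Definition periodicity_lattice (t : R) (x0 : 'I_n) (a0 : 'cV[int]_d)
  : 'cV[int]_d -> Prop :=
  fun u => forall q : 'I_n * 'cV[int]_d,
    (exists p, shadow t x0 a0 p /\ q = (p.1, p.2 + u)) <-> shadow t x0 a0 q.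

End PeriodicGraph.

Definition maxmag (d : nat) (v : 'cV[int]_d) : nat :=
  \max_(i < d) `|v i ord0|%N.

Definition is_basis_of (d k : nat) (L : 'cV[int]_d -> Prop)
  (V : 'M[int]_(d, k)) : Prop :=
  (forall c : 'cV[int]_k, V *m c = 0 -> c = 0) /\
  (forall u : 'cV[int]_d, L u <-> exists c : 'cV[int]_k, u = V *m c).

Definition pivot_at (d k : nat) (V : 'M[int]_(d, k)) (j : 'I_k) (i : 'I_d)
  : Prop :=
  V i j != 0 /\ forall i' : 'I_d, (i' < i)%N -> V i' j = 0.

Definition is_HNF_of (d k : nat) (L : 'cV[int]_d -> Prop)
  (V : 'M[int]_(d, k)) : Prop :=
  is_basis_of L V /\
  exists piv : 'I_k -> 'I_d,
    (forall j, pivot_at V j (piv j)) /\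
    (forall j j' : 'I_k, (j < j')%N -> (piv j < piv j')%N) /\
    (forall j, 0 < V (piv j) j) /\
    (forall j j' : 'I_k, (j' < j)%N ->
        0 <= V (piv j) j' /\ V (piv j) j' < V (piv j) j).

(* Main.v *)
Require Import Defs.
From HB Require Import structures.
From mathcomp Require Import all_boot all_order all_algebra.
From mathcomp Require Import reals ring.
From Stdlib Require Import Relations Classical.
From mathcomp Require Import zify.
Import Order.TTheory GRing.Theory Num.Theory.
Local Open Scope ring_scope.
Set Implicit Arguments. Unset Strict Implicit. Unset Printing Implicit Defensive.

Section Had.
Variable R : realFieldType.

Definition nrm2 n (v : 'rV[R]_n) := \sum_j v 0 j ^+ 2.

Lemma nrm2E n (v : 'rV[R]_n) : (v *m v^T) 0 0 = nrm2 v.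
Proof. by rewrite mxE; apply: eq_bigr => j _; rewrite mxE expr2. Qed.

Lemma nrm2_ge0 n (v : 'rV[R]_n) : 0 <= nrm2 v.
Proof. by apply: sumr_ge0 => j _; rewrite sqr_ge0. Qed.

Lemma nrm2_eq0 n (v : 'rV[R]_n) : nrm2 v = 0 -> v = 0.
Proof.
move=> h; apply/matrixP => i j; rewrite ord1 mxE.
have := @psumr_eq0P _ _ xpredT (fun j => v 0 j ^+ 2) (fun j _ => sqr_ge0 _) h j isT.
by move/eqP; rewrite sqrf_eq0 => /eqP.
Qed.

Lemma gram_bound p n (G : 'M[R]_(p, n)) :
  0 <= \det (G *m G^T) <= \prod_(i < p) nrm2 (row i G).
Proof.
elim: p G => [|p IH] G; first by rewrite det_mx00 big_ord0 lexx ler01.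
pose G1 : 'M_(1 + p, n) := G.
pose g := usubmx G1. pose G' := dsubmx G1.
have eG : G1 = col_mx g G' by rewrite vsubmxK.
pose Ga := G' *m G'^T. pose del := \det Ga.
have [IH0 IH1] := andP (IH G').
have eprod : \prod_(i < p.+1) nrm2 (row i G) = nrm2 g * \prod_(i < p) nrm2 (row i G').
  rewrite -[p.+1]/(1 + p)%N big_split_ord /= big_ord1; congr (_ * _).
    by rewrite /nrm2; apply: eq_bigr => b _; rewrite !mxE.
  by apply: eq_bigr => i _; rewrite /nrm2; apply: eq_bigr => b _; rewrite !mxE.
rewrite eprod.
have [del0|delne0] := eqVneq del 0.
  have /det0P [v vne0 vGa] : \det Ga == 0 by rewrite -/del del0.
  have vG' : v *m G' = 0.
    apply: nrm2_eq0; rewrite -nrm2E trmx_mul mulmxA -(mulmxA v) -/Ga vGa.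
    by rewrite mul0mx mxE.
  have -> : \det (G *m G^T) = 0.
    apply/eqP/det0P; exists (row_mx (0 : 'rV_1) v).
      by apply: contra vne0 => /eqP h; move: (congr1 (@rsubmx R 1 1 p) h); rewrite row_mxKr => ->; apply/eqP/matrixP => a b; rewrite !mxE.
    rewrite mulmxA.
    have -> : row_mx (0 : 'rV_1) v *m G = 0.
      by rewrite -[G]/G1 eG mul_row_col mul0mx add0r vG'.
    by rewrite mul0mx.
  by rewrite lexx /= mulr_ge0 ?nrm2_ge0 //; apply: prodr_ge0 => i _; exact: nrm2_ge0.
pose y := g *m G'^T *m \adj Ga.
pose q := del *: g - y *m G'.
have hq : q *m G'^T = 0.
  rewrite /q mulmxBl -scalemxAl /y -!mulmxA -/Ga mul_adj_mx.
  by rewrite mul_mx_scalar -scalemxAr subrr.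
have hq' : G' *m q^T = 0 by rewrite -(trmxK G') -trmx_mul hq trmx0.
pose E : 'M_(1 + p) := block_mx (del%:M : 'M_1) (-y) 0 1%:M.
have EG : E *m G1 = col_mx q G'.
  by rewrite eG /E mul_block_col mulNmx mul0mx add0r mul1mx mul_scalar_mx.
have detE : \det E = del by rewrite det_ublock det1 mulr1 det_mx11 mxE eqxx mulr1n.
have key : del * \det (G *m G^T) * del = nrm2 q * del.
  move: (congr1 (fun M => \det (M *m M^T)) EG); rewrite /=.
  rewrite trmx_mul mulmxA -(mulmxA E) !det_mulmx det_tr detE.
  rewrite tr_col_mx mul_col_row hq hq' det_ublock det_mx11 nrm2E -/Ga.
  by move=> <-; rewrite -[G]/G1 mulrC mulrA.
have hq2 : nrm2 q <= del ^+ 2 * nrm2 g.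
  have eg : del *: g = q + y *m G' by rewrite /q subrK.
  have : (del *: g) *m (del *: g)^T = q *m q^T + (y *m G') *m (y *m G')^T.
    rewrite eg linearD /= mulmxDl !mulmxDr.
    have h1 : q *m (y *m G')^T = 0 by rewrite trmx_mul mulmxA hq mul0mx.
    have h2 : (y *m G') *m q^T = 0 by rewrite -mulmxA hq' mulmx0.
    by rewrite h1 h2 addr0 add0r.
  move=> e0.
  have e1 : nrm2 (del *: g) = nrm2 q + nrm2 (y *m G').
    by rewrite -!nrm2E e0 [in LHS]mxE.
  have e2 : nrm2 (del *: g) = del ^+ 2 * nrm2 g.
    by rewrite /nrm2 mulr_sumr; apply: eq_bigr => j _; rewrite mxE exprMn.
  by rewrite -e2 e1 lerDl nrm2_ge0.
have delpos : 0 < del by rewrite lt_def delne0 IH0.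
have eD : \det (G *m G^T) = nrm2 q / del.
  apply: (mulIf delne0); rewrite divfK //; apply: (mulIf delne0).
  by rewrite -key [del * _]mulrC.
rewrite eD divr_ge0 ?nrm2_ge0 ?(ltW delpos) //=.
rewrite ler_pdivrMr //.
apply: (le_trans hq2).
have -> : nrm2 g * \prod_(i < p) nrm2 (row i G') * del = del * (\prod_(i < p) nrm2 (row i G') * nrm2 g) by ring.
by rewrite expr2 -mulrA ler_wpM2l ?(ltW delpos) // ler_wpM2r ?nrm2_ge0.
Qed.

Lemma hadamard_col n (A : 'M[R]_n) :
  (\det A) ^+ 2 <= \prod_(j < n) \sum_(i < n) A i j ^+ 2.
Proof.
rewrite -det_tr.
have /andP [_ h] := gram_bound A^T.
rewrite trmxK det_mulmx det_tr in h.
rewrite det_tr expr2; apply: (le_trans h).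
apply: ler_prod => j _; rewrite nrm2_ge0 /=.
by rewrite le_eqVlt; apply/orP; left; apply/eqP; apply: eq_bigr => i _; rewrite !mxE.
Qed.
End Had.

Section Graph.
Variables (R : realType) (d n m : nat).
Variables (src tgt : 'I_m -> 'I_n) (shift : 'I_m -> 'cV[int]_d).
Variables (Fe : 'I_m -> R) (t : R).

Definition dart := ('I_m * bool)%type.
Definition dsrc (a : dart) := if a.2 then src a.1 else tgt a.1.
Definition dtgt (a : dart) := if a.2 then tgt a.1 else src a.1.
Definition dsh (a : dart) : 'cV[int]_d := if a.2 then shift a.1 else - shift a.1.
Definition dflip (a : dart) : dart := (a.1, ~~ a.2).

Fixpoint walk (x : 'I_n) (s : seq dart) (y : 'I_n) : Prop :=
  match s with
  | [::] => x = y
  | a :: s' => Fe a.1 <= t /\ dsrc a = x /\ walk (dtgt a) s' y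
  end.

Definition wsum (s : seq dart) : 'cV[int]_d := \sum_(a <- s) dsh a.

Lemma wsum_cat s1 s2 : wsum (s1 ++ s2) = wsum s1 + wsum s2.
Proof. by rewrite /wsum big_cat. Qed.

Lemma wsum_cons a s : wsum (a :: s) = dsh a + wsum s.
Proof. by rewrite /wsum big_cons. Qed.

Lemma wsum_nil : wsum [::] = 0.
Proof. by rewrite /wsum big_nil. Qed.

Lemma walk_cat x s1 s2 z :
  walk x (s1 ++ s2) z <-> exists y, walk x s1 y /\ walk y s2 z.
Proof.
elim: s1 x => [|a s1 IH] x /=.
  by split; [move=> h; exists x | move=> [y [-> h]]].
split.
  move=> [h1 [h2 /IH [y [h3 h4]]]]; by exists y.
move=> [y [[h1 [h2 h3]] h4]]; split; first by [].
by split; last by apply/IH; exists y.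
Qed.

Lemma dsrc_flip a : dsrc (dflip a) = dtgt a.
Proof. by rewrite /dsrc /dtgt /dflip /=; case: a.2. Qed.
Lemma dtgt_flip a : dtgt (dflip a) = dsrc a.
Proof. by rewrite /dsrc /dtgt /dflip /=; case: a.2. Qed.
Lemma dsh_flip a : dsh (dflip a) = - dsh a.
Proof. by rewrite /dsh /dflip /=; case: a.2; rewrite ?opprK. Qed.

Definition wrev s := rev (map dflip s).

Lemma walk_rev x s y : walk x s y -> walk y (wrev s) x.
Proof.
elim: s x => [|a s IH] x /=; first by move=> ->.
move=> [h1 [h2 h3]]; rewrite /wrev map_cons rev_cons -cats1.
apply/walk_cat; exists (dtgt a); split; first exact: IH.
by rewrite /= dsrc_flip dtgt_flip h2.
Qed.

Lemma wsum_rev s : wsum (wrev s) = - wsum s.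
Proof.
elim: s => [|a s IH]; first by rewrite /wrev /= wsum_nil oppr0.
rewrite /wrev map_cons rev_cons -cats1 wsum_cat -/(wrev s) IH wsum_cons.
by rewrite wsum_cons wsum_nil addr0 dsh_flip opprD addrC.
Qed.


Lemma dup_split (c : seq dart) : ~~ uniq (map fst c) ->
  exists c1 a1 c2 a2 c3, c = c1 ++ a1 :: c2 ++ a2 :: c3 /\ a1.1 = a2.1.
Proof.
elim: c => [|a c IH] //=; rewrite negb_and negbK.
case: (boolP (a.1 \in map fst c)) => /= [hin _|_ hu].
  have /mapP [a2 ha2 e] := hin.
  case/splitPr: ha2 => c2 c3.
  by exists [::], a, c2, a2, c3.
have [c1 [a1 [c2 [a2 [c3 [-> e]]]]]] := IH hu.
by exists (a :: c1), a1, c2, a2, c3.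
Qed.

Lemma short (S : 'cV[int]_d -> Prop)
  (hS : forall u v, S u -> S v -> S (u + v)) :
  forall c y, walk y c y -> ~ S (wsum c) ->
  exists y' p c', walk y p y' /\ walk y' c' y' /\ ~ S (wsum c') /\
    uniq (map fst c').
Proof.
move=> c; have [N] := ubnP (size c); elim: N c => // N IH c hN y hw hS'.
case: (boolP (uniq (map fst c))) => hu.
  by exists y, [::], c.
have [c1 [a1 [c2 [a2 [c3 [ec e12]]]]]] := dup_split hu.
move: hw; rewrite ec => /walk_cat [z1 [w1 /= [hF1 [hs1 /walk_cat [z2 [w2 /= [hF2 [hs2 w3]]]]]]]].
have hsz : size c = (size c1 + size c2 + size c3 + 2)%N.
  by rewrite ec size_cat /= size_cat /=; lia.
case: (eqVneq a2.2 a1.2) => hb.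
  have ea : a2 = a1 by move: e12 hb; move: (a1) (a2) => [? ?] [? ?] /= -> ->.
  subst a2.
  have wA : walk y (c1 ++ a1 :: c3) y by apply/walk_cat; exists z1.
  have ez : z2 = z1 by rewrite -hs2 hs1.
  have wB : walk z1 (a1 :: c2) z1 by rewrite /= -ez; do !split => //.
  have esum : wsum c = wsum (c1 ++ a1 :: c3) + wsum (a1 :: c2).
    rewrite ec !(wsum_cat, wsum_cons).
    apply/matrixP => i j; rewrite !mxE; ring.
  case: (classic (S (wsum (c1 ++ a1 :: c3)))) => hA.
    case: (classic (S (wsum (a1 :: c2)))) => hB.
      by case: hS'; rewrite esum; apply: hS.
    have [|y' [p [c' [h1 [h2 [h3 h4]]]]]] := IH (a1 :: c2) _ z1 wB hB.
      by move: hN; rewrite hsz /=; lia.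
    exists y', (c1 ++ p), c'; split => //.
    by apply/walk_cat; exists z1.
  have [|y' [p [c' [h1 [h2 [h3 h4]]]]]] := IH (c1 ++ a1 :: c3) _ y wA hA.
    by move: hN; rewrite hsz size_cat /=; lia.
  by exists y', p, c'.
have ea : a2 = dflip a1.
  move: e12 hb; move: (a1) (a2) => [? b1] [? b2] /= -> hb; rewrite /dflip /=.
  by case: b1 b2 hb => [] [].
subst a2.
move: hs2 w3; rewrite dsrc_flip dtgt_flip hs1 => hs2 w3.
have wA : walk y (c1 ++ c3) y by apply/walk_cat; exists z1.
have wB : walk (dtgt a1) c2 (dtgt a1) by rewrite {2}hs2.
have esum : wsum c = wsum (c1 ++ c3) + wsum c2.
  rewrite ec !(wsum_cat, wsum_cons) dsh_flip.
  apply/matrixP => i j; rewrite !mxE; ring.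
case: (classic (S (wsum (c1 ++ c3)))) => hA.
  case: (classic (S (wsum c2))) => hB.
    by case: hS'; rewrite esum; apply: hS.
  have [|y' [p [c' [h1 [h2 [h3 h4]]]]]] := IH c2 _ (dtgt a1) wB hB.
    by move: hN; rewrite hsz /=; lia.
  exists y', (c1 ++ a1 :: p), c'; split => //.
  by apply/walk_cat; exists z1.
have [|y' [p [c' [h1 [h2 [h3 h4]]]]]] := IH (c1 ++ c3) _ y wA hA.
  by move: hN; rewrite hsz size_cat /=; lia.
by exists y', p, c'.
Qed.

Definition Dmax := (\max_(e < m) maxmag (shift e))%N.

Lemma dsh_bound a i : `|dsh a i ord0| <= (Dmax)%:Z.
Proof.
have h1 : (`|shift a.1 i ord0|%N <= maxmag (shift a.1))%N.
  by apply: (@leq_bigmax _ (fun i => `|shift a.1 i ord0|%N)).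
have h2 : (maxmag (shift a.1) <= Dmax)%N.
  by apply: (@leq_bigmax _ (fun e => maxmag (shift e))).
have : (`|shift a.1 i ord0|%N <= Dmax)%N by apply: leq_trans h1 h2.
rewrite -lez_nat abszE => h.
by rewrite /dsh; case: a.2; rewrite ?mxE ?normrN.
Qed.

Lemma wsum_bound c i : `|wsum c i ord0| <= (size c * Dmax)%:Z.
Proof.
elim: c => [|a c IH]; first by rewrite wsum_nil mxE normr0.
rewrite wsum_cons mxE /= mulSn PoszD.
apply: le_trans (ler_normD _ _) _.
by apply: lerD => //; apply: dsh_bound.
Qed.

Lemma uniq_bound c : uniq (map fst c) -> (maxmag (wsum c) <= m * Dmax)%N.
Proof.
move=> hu.
have hs : (size c <= m)%N.
  rewrite -(size_map fst) -[X in (_ <= X)%N](size_enum_ord m).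
  by apply: uniq_leq_size => // x _; rewrite mem_enum.
apply/bigmax_leqP => i _.
have := wsum_bound c i; rewrite -abszE lez_nat => h.
apply: leq_trans h _; exact: leq_mul.
Qed.

Variables (x0 : 'I_n) (a0 : 'cV[int]_d).

Notation shadow := (shadow src tgt shift Fe t x0 a0).
Notation Lper := (periodicity_lattice src tgt shift Fe t x0 a0).
Notation qcomp := (qcomp src tgt Fe t x0).
Notation ladj := (ladj src tgt shift Fe t x0).

Lemma sh_walk q : shadow q -> exists s, walk x0 s q.1 /\ q.2 = a0 + wsum s.
Proof.
move=> hq0; have hq := clos_rt_rtn1 _ _ _ _ hq0; clear hq0; elim: hq => [|p q' hl _ [s [hs e]]].
  by exists [::]; rewrite wsum_nil addr0.
move: hl => [_ [_ [e0 [he [[h1 [h2 h3]] | [h1 [h2 h3]]]]]]].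
  exists (rcons s (e0, true)); rewrite -cats1 wsum_cat wsum_cons wsum_nil addr0.
  split; last by rewrite h3 e addrA.
  apply/walk_cat; exists p.1; split => //=.
exists (rcons s (e0, false)); rewrite -cats1 wsum_cat wsum_cons wsum_nil addr0.
split; last by rewrite /dsh /= addrA -e h3 addrK.
apply/walk_cat; exists p.1; split => //=.
Qed.

Lemma walk_sh_gen x a s y : qcomp x -> walk x s y ->
  clos_refl_trans _ ladj (x, a) (y, a + wsum s).
Proof.
elim: s x a => [|b s IH] x a /=.
  by move=> _ ->; rewrite wsum_nil addr0; apply: rt_refl.
move=> hx [hF [hs hw]].
have hx' : qcomp (dtgt b).
  apply: rt_trans hx (rt_step _ _ _ _ _); exists b.1; split => //.
  by move: hs; rewrite /dsrc /dtgt; case: b.2 => <-; [left|right].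
apply: rt_trans (rt_step _ _ _ (dtgt b, a + dsh b) _) _.
  split => //; split => //; exists b.1; split => //.
  move: hs; rewrite /dsrc /dtgt /dsh; case: b.2 => <- /=; [left|right] => //.
  by do !split; rewrite subrK.
by rewrite wsum_cons addrA; apply: IH.
Qed.

Lemma walk_sh s y : walk x0 s y -> shadow (y, a0 + wsum s).
Proof. by apply: walk_sh_gen; apply: rt_refl. Qed.

Lemma Lper_walk u : Lper u -> exists c, walk x0 c x0 /\ u = wsum c.
Proof.
move=> h.
have : shadow (x0, a0 + u).
  apply/h; exists (x0, a0); split => //; exact: rt_refl.
move=> /sh_walk [s [hs e]]; exists s; split => //.
by move: e => /= /addrI.
Qed.

Lemma walk_Lper c : walk x0 c x0 -> Lper (wsum c).
Proof.
move=> hc q; split.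
  move=> [p [hp ->]]; have [s [hs e]] := sh_walk hp.
  have := walk_sh (s := c ++ s) (y := p.1).
  rewrite wsum_cat; case: p hp hs e => p1 p2 /= _ hs ->.
  move=> h; rewrite -addrA [wsum s + _]addrC; apply: h.
  by apply/walk_cat; exists x0.
move=> hq; have [s [hs e]] := sh_walk hq.
exists (q.1, a0 + wsum (wrev c ++ s)); split.
  by apply: walk_sh; apply/walk_cat; exists x0; split => //; exact: walk_rev.
case: q hq hs e => q1 q2 /= _ _ ->.
by rewrite wsum_cat wsum_rev [- _ + _]addrC addrA subrK.
Qed.

Lemma short_L (S : 'cV[int]_d -> Prop)
  (hS : forall u v, S u -> S v -> S (u + v)) u :
  Lper u -> ~ S u -> exists w, Lper w /\ ~ S w /\ (maxmag w <= m * Dmax)%N.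
Proof.
move=> /Lper_walk [c [hc ->]] hSu.
have [y' [p [c' [h1 [h2 [h3 h4]]]]]] := short hS hc hSu.
exists (wsum c'); split; last by split => //; exact: uniq_bound.
have -> : wsum c' = wsum (p ++ c' ++ wrev p).
  by rewrite !wsum_cat wsum_rev addrCA subrr addr0.
apply: walk_Lper; apply/walk_cat; exists y'; split => //.
by apply/walk_cat; exists y'; split => //; exact: walk_rev.
Qed.

End Graph.

Definition toQ p q (A : 'M[int]_(p, q)) : 'M[rat]_(p, q) := map_mx intr A.

Lemma splitI1 s (c : 'I_(1 + s)) : c = lshift s ord0 \/ exists c', c = rshift 1 c'.
Proof.
case: (splitP c) => [j e|j e]; [left|right; exists j]; apply: val_inj => /=.
  by rewrite e ord1.
by rewrite e.
Qed.

Lemma build (d k : nat) (L : 'cV[int]_d -> Prop) (M : nat) (V : 'M[int]_(d, k))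
  (hVL : forall b, L (col b V)) (hrank : (k <= \rank (toQ V^T))%N)
  (hshort : forall S : 'cV[int]_d -> Prop, (forall u v, S u -> S v -> S (u + v)) ->
      forall u, L u -> ~ S u -> exists w, L w /\ ~ S w /\ (maxmag w <= M)%N) :
  forall s, (s <= k)%N -> exists Wt : 'M[int]_(s, d),
    (forall b, L (row b Wt)^T) /\ (forall b i, (`|Wt b i|%N <= M)%N) /\
    \rank (toQ Wt) = s.
Proof.
elim=> [|s IH] hs.
  exists 0; split; first by case.
  split; first by case.
  by apply/eqP; rewrite -leqn0 rank_leq_row.
have [Wt [hL [hB hr]]] := IH (ltnW hs).
pose S (u : 'cV[int]_d) : Prop := ((toQ u)^T <= toQ Wt)%MS.
have hS : forall u v, S u -> S v -> S (u + v).
  move=> u v; rewrite /S /toQ map_mxD linearD /=; exact: addmx_sub.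
have [b hb] : exists b, ~ S (col b V).
  apply: NNPP => hno.
  have hall : forall b, S (col b V).
    by move=> b; apply: NNPP => h; apply: hno; exists b.
  have : (toQ V^T <= toQ Wt)%MS.
    apply/row_subP => b; have := hall b; rewrite /S.
    suff -> : row b (toQ V^T) = (toQ (col b V))^T by [].
    by apply/matrixP => ? ?; rewrite !mxE.
  move/mxrankS; rewrite hr => h; have := leq_trans hrank h; lia.
have [w [hwL [hwS hwM]]] := hshort S hS _ (hVL b) hb.
exists (col_mx w^T Wt); split.
  move=> c; case: (splitI1 c) => [->|[c' ->]].
    rewrite (@rowKu _ 1 s d); suff -> : (row ord0 w^T)^T = w by [].
    by apply/matrixP => a e; rewrite !mxE (ord1 e).
  by rewrite (@rowKd _ 1 s d).
split.
  move=> c i; case: (splitI1 c) => [->|[c' ->]].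
    rewrite (@col_mxEu _ 1 s d) mxE; apply: leq_trans hwM.
    exact: (@leq_bigmax _ (fun i => `|w i ord0|%N)).
  by rewrite (@col_mxEd _ 1 s d).
have e1 : toQ (col_mx w^T Wt) = col_mx (toQ w^T) (toQ Wt) by rewrite /toQ map_col_mx.
rewrite e1.
have hlt : (toQ Wt < col_mx (toQ w^T) (toQ Wt))%MS.
  rewrite ltmxE; apply/andP; split.
    apply/row_subP => c; rewrite -(@rowKd _ 1 s d c (toQ w^T) (toQ Wt)); exact: row_sub.
  apply/negP => h; apply: hwS; rewrite /S.
  have -> : (toQ w)^T = row (lshift s ord0) (col_mx (toQ w^T) (toQ Wt)).
    by rewrite (@rowKu _ 1 s d); apply/matrixP => a c; rewrite !mxE (ord1 a).
  exact: submx_trans (row_sub _ _) h.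
have := rank_ltmx hlt; rewrite hr => h1.
apply/eqP; rewrite eqn_leq h1 andbT.
exact: rank_leq_row.
Qed.

Lemma hadamard_int n (A : 'M[int]_n) :
  (\det A) ^+ 2 <= \prod_(j < n) \sum_(i < n) A i j ^+ 2.
Proof.
have h := hadamard_col (toQ A).
rewrite /toQ det_map_mx in h.
rewrite -(ler_int rat) rmorphXn /=; apply: (le_trans h).
rewrite rmorph_prod /=; apply: ler_prod => b _.
rewrite sumr_ge0 /=; last by move=> a _; rewrite sqr_ge0.
rewrite rmorph_sum /=; rewrite le_eqVlt; apply/orP; left; apply/eqP.
by apply: eq_bigr => a _; rewrite mxE rmorphXn.
Qed.

Lemma sq_le (x b : int) : `|x| <= b -> x ^+ 2 <= b ^+ 2.
Proof.
move=> h; rewrite -(ger0_norm (sqr_ge0 x)) normrX.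
by apply: lerXn2r => //; rewrite nnegrE ?normr_ge0 //; apply: le_trans h.
Qed.

Lemma pow_le (a b : int) (e f : nat) : 1 <= a -> a <= b -> (e <= f)%N -> a ^+ e <= b ^+ f.
Proof.
move=> ha hab hef.
apply: (@le_trans _ _ (b ^+ e)).
  have h0 : 0 <= a by exact: (le_trans ler01 ha).
  by apply: lerXn2r => //; rewrite nnegrE //; exact: (le_trans h0 hab).
by apply: ler_weXn2l => //; exact: (le_trans ha hab).
Qed.

Lemma block_det_trick k (a : int) (rr : 'rV[int]_k) (cc : 'cV[int]_k) (Wp : 'M[int]_k) :
  \det (block_mx (a%:M : 'M_1) rr cc Wp) = \det (block_mx 0 rr cc Wp) + a * \det Wp.
Proof.
have := @determinant_multilinear _ _ (block_mx (a%:M : 'M_1) rr cc Wp)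
  (block_mx 0 rr cc Wp) (block_mx 1 0 cc Wp) (lshift k ord0) 1 a.
rewrite det_lblock det1 !mul1r; apply.
- rewrite !block_mxEv !(@rowKu _ 1 k) !row_row_mx scale1r !scale_row_mx add_row_mx.
  congr row_mx.
    by apply/matrixP => p q; rewrite !mxE !ord1 /= add0r mulr1.
  by apply/matrixP => p q; rewrite !mxE mulr0 addr0.
- by rewrite !block_mxEv !row'Ku (flatmx0 (row' _ (row_mx 0 rr))) (flatmx0 (row' _ (row_mx _ rr))) ?(flatmx0 (row' _ (row_mx 1 0))).
- by rewrite !block_mxEv !row'Ku (flatmx0 (row' _ (row_mx (1 : 'M_1) (0 : 'M_(1,k))))) (flatmx0 (row' _ (row_mx _ rr))).
Qed.

Lemma block_had k (rr : 'rV[int]_k) (cc : 'cV[int]_k) (Wp : 'M[int]_k) :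
  (\det (block_mx 0 rr cc Wp)) ^+ 2 <=
  (\sum_(a < k) cc a ord0 ^+ 2) * \prod_(b < k) (rr ord0 b ^+ 2 + \sum_(a < k) Wp a b ^+ 2).
Proof.
apply: (le_trans (hadamard_int _)).
rewrite big_split_ord /= big_ord1.
apply: ler_pM.
- by apply: sumr_ge0 => ? _; rewrite sqr_ge0.
- by apply: prodr_ge0 => ? _; apply: sumr_ge0 => ? _; rewrite sqr_ge0.
- rewrite big_split_ord /= big_ord1 block_mxEul mxE expr0n /= add0r.
  by rewrite le_eqVlt; apply/orP; left; apply/eqP; apply: eq_bigr => a _; rewrite block_mxEdl.
- apply: ler_prod => b _; rewrite sumr_ge0 /=; last by move=> ? _; rewrite sqr_ge0.
  rewrite big_split_ord /= big_ord1 block_mxEur.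
  rewrite le_eqVlt; apply/orP; left; apply/eqP; congr (_ + _).
  by apply: eq_bigr => a _; rewrite block_mxEdr.
Qed.

Section HNF.
Variables (d k : nat) (V : 'M[int]_(d, k)) (piv : 'I_k -> 'I_d).
Hypothesis hpiv : forall j, pivot_at V j (piv j).
Hypothesis hmono : forall j j' : 'I_k, (j < j')%N -> (piv j < piv j')%N.
Hypothesis hpos : forall j, 0 < V (piv j) j.
Hypothesis hleft : forall j j' : 'I_k, (j' < j)%N ->
        0 <= V (piv j) j' /\ V (piv j) j' < V (piv j) j.

Definition VP : 'M[int]_k := \matrix_(a, b) V (piv a) b.

Lemma hzero (a b : 'I_k) : (a < b)%N -> V (piv a) b = 0.
Proof. by move=> h; apply: (hpiv b).2; apply: hmono. Qed.

Lemma piv_inj : injective piv.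
Proof.
move=> a b e; case: (ltngtP a b) => h.
- by have := hmono h; rewrite e ltnn.
- by have := hmono h; rewrite e ltnn.
- exact: val_inj h.
Qed.

Lemma detVP : \det VP = \prod_a V (piv a) a.
Proof.
rewrite det_trig; first by apply: eq_bigr => a _; rewrite mxE.
by apply/is_trig_mxP => a b h; rewrite mxE hzero.
Qed.

Lemma detVP_gt0 : 0 < \det VP.
Proof. by rewrite detVP; apply: prodr_gt0 => a _. Qed.

Lemma piv_le (a b : 'I_k) : `|V (piv a) b| <= \det VP.
Proof.
apply: (@le_trans _ _ (V (piv a) a)).
  case: (ltngtP a b) => h.
  - by rewrite hzero // normr0 ltW.
  - have [h1 h2] := hleft h; by rewrite ger0_norm // ltW.
  - by move/val_inj: h => ->; rewrite ger0_norm // ltW.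
rewrite detVP (bigD1 a) //=; apply: ler_peMr; first exact: ltW.
have := @ler_prod _ _ (index_enum 'I_k) (fun b => b != a) (fun=> 1) (fun b => V (piv b) b).
rewrite big1 //; apply => c _; rewrite ler01 /= -gtz0_ge1; exact: hpos.
Qed.

Definition Sel : 'M[int]_(d, k) := \matrix_(r, a) ((r == piv a)%:R : int).

Lemma VPtE : VP^T = V^T *m Sel.
Proof.
apply/matrixP => b a; rewrite !mxE (bigD1 (piv a)) //= big1 => [|r hr].
  by rewrite !mxE eqxx mulr1 addr0.
by rewrite !mxE (negbTE hr) mulr0.
Qed.

Lemma rankV : (k <= \rank (toQ V^T))%N.
Proof.
have h : \rank (toQ VP^T) = k.
  apply/eqP; rewrite -/(row_free _) row_free_unit unitmxE unitfE.
  by rewrite /toQ det_map_mx det_tr intr_eq0 gt_eqF // detVP_gt0.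
rewrite -{1}h VPtE /toQ map_mxM; exact: mxrankM_maxl.
Qed.

Section Final.
Variables (M : nat) (Wt : 'M[int]_(k, d)) (C : 'M[int]_k).
Hypothesis hWC : Wt^T = V *m C.
Hypothesis hB : forall b i, (`|Wt b i|%N <= M)%N.
Hypothesis hr : \rank (toQ Wt) = k.

Definition WP : 'M[int]_k := \matrix_(a, b) Wt b (piv a).

Lemma hWP : WP = VP *m C.
Proof.
apply/matrixP => a b; rewrite !mxE.
have -> : Wt b (piv a) = Wt^T (piv a) b by rewrite mxE.
by rewrite hWC mxE; apply: eq_bigr => c _; rewrite mxE.
Qed.

Lemma detC : \det C != 0.
Proof.
have h1 : (k <= \rank (toQ C^T))%N.
  rewrite -{1}hr.
  have -> : Wt = C^T *m V^T by rewrite -trmx_mul -hWC trmxK.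
  by rewrite /toQ map_mxM; exact: mxrankM_maxl.
have : row_free (toQ C^T).
  by rewrite /row_free eqn_leq rank_leq_row h1.
rewrite row_free_unit unitmxE unitfE /toQ det_map_mx det_tr intr_eq0.
by [].
Qed.

Lemma hdet : \det VP <= `|\det WP|.
Proof.
rewrite hWP det_mulmx normrM (gtr0_norm (detVP_gt0)).
apply: ler_peMr; first exact: ltW detVP_gt0.
by rewrite -gtz0_ge1 normr_gt0 detC.
Qed.

Lemma hWb b a : `|Wt b a| <= (M%:Z).
Proof. by rewrite -abszE lez_nat hB. Qed.

Lemma sq_le' (x : int) : `|x| ^+ 2 = x ^+ 2.
Proof. by rewrite -normrX ger0_norm // sqr_ge0. Qed.

Lemma hHad : (\det WP) ^+ 2 <= ((M%:Z) ^+ 2 *+ k) ^+ k.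
Proof.
apply: (le_trans (hadamard_int WP)).
have -> : ((M%:Z) ^+ 2 *+ k) ^+ k = \prod_(b < k) ((M%:Z) ^+ 2 *+ k).
  by rewrite prodr_const card_ord.
apply: ler_prod => b _; rewrite sumr_ge0 /=; last by move=> a _; rewrite sqr_ge0.
have -> : (M%:Z) ^+ 2 *+ k = \sum_(a < k) (M%:Z) ^+ 2 by rewrite sumr_const card_ord.
by apply: ler_sum => a _; rewrite mxE; apply: sq_le; apply: hWb.
Qed.

Lemma hdet2 : (\det VP) ^+ 2 <= (\det WP) ^+ 2.
Proof.
rewrite -[(\det WP) ^+ 2]sq_le'; apply: sq_le.
by rewrite ger0_norm ?hdet // ltW // detVP_gt0.
Qed.

Lemma hM1 : (0 < k)%N -> 1 <= (M%:Z).
Proof.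
move=> hk; case: M hWb hHad => [|M'] _ h; last by rewrite lez_nat.
have h1 : 1 <= (\det VP) ^+ 2.
  by rewrite exprn_ege1 // -gtz0_ge1 detVP_gt0.
have := le_trans (le_trans h1 hdet2) h.
by rewrite expr0n /= mul0rn expr0n; move: hk; rewrite lt0n => /negbTE ->.
Qed.

Lemma mn_ge1 (x : int) n : 1 <= x -> (0 < n)%N -> 1 <= x *+ n.
Proof.
move=> hx hn; apply: (le_trans hx).
have h : x *+ 1 <= x *+ n by apply: ler_wpMn2l => //; exact: (le_trans ler01 hx).
by move: h; rewrite mulr1n.
Qed.

Lemma bound_piv a j (hkd : (k <= d)%N) :
  V (piv a) j ^+ 2 <= ((M%:Z) ^+ 2 *+ d) ^+ d.
Proof.
have hk : (0 < k)%N by apply: leq_ltn_trans (ltn_ord a).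
have hM := hM1 hk.
have hM2 : 1 <= (M%:Z) ^+ 2 by rewrite exprn_ege1.
have h1 : V (piv a) j ^+ 2 <= (\det VP) ^+ 2 by apply: sq_le; apply: piv_le.
apply: (le_trans h1); apply: (le_trans hdet2); apply: (le_trans hHad).
apply: pow_le => //; first exact: mn_ge1.
by apply: ler_wpMn2l => //; exact: (le_trans ler01 hM2).
Qed.

Lemma bound_nonpiv i j (hkd : (k.+1 <= d)%N) :
  V i j ^+ 2 <= ((M%:Z) ^+ 2 *+ d) ^+ d.
Proof.
have hk : (0 < k)%N by apply: leq_ltn_trans (ltn_ord j).
have hM := hM1 hk.
have hM2 : 1 <= (M%:Z) ^+ 2 by rewrite exprn_ege1.
have hM20 : 0 <= (M%:Z) ^+ 2 by exact: (le_trans ler01 hM2).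
pose Vi := row i V. pose ej : 'M[int]_(k, 1) := delta_mx j ord0.
pose rr := Vi *m C. pose cc := VP *m ej.
have hx : Vi *m ej = (V i j)%:M.
  by rewrite -colE; apply/matrixP => p q; rewrite !mxE !ord1 eqxx mulr1n.
have eZ' : block_mx ((V i j)%:M : 'M_1) rr cc WP = col_mx Vi VP *m row_mx ej C.
  by rewrite mul_col_row -hWP hx.
have dZ' : \det (block_mx ((V i j)%:M : 'M_1) rr cc WP) = 0.
  have : ~~ row_free (toQ (col_mx Vi VP *m row_mx ej C)).
    have hr2 : (\rank (toQ (col_mx Vi VP) *m toQ (row_mx ej C)) <= k)%N.
      exact: leq_trans (mxrankM_maxl _ _) (rank_leq_col _).
    have e : toQ (col_mx Vi VP *m row_mx ej C) = toQ (col_mx Vi VP) *m toQ (row_mx ej C).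
      by rewrite /toQ map_mxM.
    rewrite /row_free e; apply/negP => /eqP h.
    by move: hr2; rewrite h add1n ltnn.
  rewrite row_free_unit unitmxE unitfE negbK /toQ det_map_mx intr_eq0 -eZ'.
  by move/eqP.
have dZ : \det (block_mx 0 rr cc WP) = - (V i j * \det WP).
  by apply/eqP; rewrite -addr_eq0 -block_det_trick dZ'.
have hH := block_had rr cc WP.
rewrite dZ sqrrN exprMn in hH.
have hcc : forall a, cc a ord0 = V (piv a) j.
  by move=> a; rewrite /cc -colE !mxE.
have hrr : forall b, rr ord0 b = Wt b i.
  by move=> b; rewrite /rr /Vi -row_mul -hWC !mxE.
pose DW := (\det WP) ^+ 2.
pose T := (M%:Z) ^+ 2 *+ k.+1.
have hDW : 0 < DW.
  apply: (lt_le_trans _ hdet2); rewrite exprn_gt0 //; exact: detVP_gt0.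
have hS : \sum_(a < k) cc a ord0 ^+ 2 <= DW *+ k.
  have -> : DW *+ k = \sum_(a < k) DW by rewrite sumr_const card_ord.
  apply: ler_sum => a _; rewrite hcc; apply: (le_trans _ hdet2).
  by apply: sq_le; apply: piv_le.
have hP : \prod_(b < k) (rr ord0 b ^+ 2 + \sum_(a < k) WP a b ^+ 2) <= T ^+ k.
  have -> : T ^+ k = \prod_(b < k) T by rewrite prodr_const card_ord.
  apply: ler_prod => b _; apply/andP; split.
    by rewrite addr_ge0 ?sqr_ge0 //; apply: sumr_ge0 => ? _; rewrite sqr_ge0.
  rewrite /T mulrS; apply: lerD; first by rewrite hrr; apply: sq_le; apply: hWb.
  have -> : (M%:Z) ^+ 2 *+ k = \sum_(a < k) (M%:Z) ^+ 2 by rewrite sumr_const card_ord.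
  by apply: ler_sum => a _; rewrite mxE; apply: sq_le; apply: hWb.
have h2 : V i j ^+ 2 * DW <= (T ^+ k *+ k) * DW.
  apply: (le_trans hH).
  have -> : (T ^+ k *+ k) * DW = (DW *+ k) * T ^+ k by rewrite !mulrnAl mulrC.
  apply: ler_pM => //.
  - by apply: sumr_ge0 => ? _; rewrite sqr_ge0.
  - by apply: prodr_ge0 => ? _; rewrite addr_ge0 ?sqr_ge0 //; apply: sumr_ge0 => ? _; rewrite sqr_ge0.
rewrite ler_pM2r // in h2.
apply: (le_trans h2).
have hT1 : 1 <= T by apply: mn_ge1.
have hkT : (k%:R : int) <= T.
  apply: (@le_trans _ _ (1 *+ k.+1)); first by rewrite ler_nat.
  by rewrite lerMn2r hM2 orbT.
apply: (@le_trans _ _ (T ^+ k.+1)).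
  rewrite exprSr -mulr_natr; apply: ler_wpM2l => //.
  by apply: exprn_ge0; exact: (le_trans ler01 hT1).
apply: pow_le => //.
by apply: ler_wpMn2l.
Qed.

End Final.
End HNF.

Unset Implicit Arguments.

Theorem mainTheorem9 (R : realType) (d n m : nat)
  (src tgt : 'I_m -> 'I_n) (shift : 'I_m -> 'cV[int]_d)
  (Fv : 'I_n -> R) (Fe : 'I_m -> R)
  (hF : forall e : 'I_m, Fv (src e) <= Fe e /\ Fv (tgt e) <= Fe e)
  (D : nat) (hD : D = (\max_(e < m) maxmag (shift e))%N)
  (t : R) (x0 : 'I_n) (hx0 : Fv x0 <= t) (a0 : 'cV[int]_d)
  (k : nat) (V : 'M[int]_(d, k))
  (hV : is_HNF_of (periodicity_lattice src tgt shift Fe t x0 a0) V) :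
  forall (i : 'I_d) (j : 'I_k),
    ((`|V i j|)%:~R : R) <= (Num.sqrt (d%:R) * D%:R * m%:R) ^+ d.
Proof.
move=> i j.
case: hV => [[_ hbas] [piv [hpiv [hmono [hpos hleft]]]]].
set L := periodicity_lattice src tgt shift Fe t x0 a0.
pose M := (m * Dmax shift)%N.
have hVL : forall b, L (col b V).
  by move=> b; apply/(hbas _).2; exists (delta_mx b 0); rewrite colE.
have hshort : forall S : 'cV[int]_d -> Prop, (forall u v, S u -> S v -> S (u + v)) ->
    forall u, L u -> ~ S u -> exists w, L w /\ ~ S w /\ (maxmag w <= M)%N.
  move=> S hS u hu hnu. have := short_L (R:=R) (src:=src) (tgt:=tgt) (Fe:=Fe) (t:=t) (x0:=x0) (a0:=a0) hS hu hnu. exact.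
have [Wt [hWL [hB hr]]] := build hVL (rankV hpiv hmono hpos) hshort (leqnn k).
have [cf hcf] := @fin_all_exists _ (fun _ => 'cV[int]_k)
  (fun b c => (row b Wt)^T = V *m c) (fun b => (hbas _).1 (hWL b)).
pose C : 'M[int]_k := \matrix_(a, b) cf b a ord0.
have hWC : Wt^T = V *m C.
  apply/matrixP => r b; rewrite !mxE.
  have := congr1 (fun X : 'cV[int]_d => X r ord0) (hcf b); rewrite !mxE => ->.
  by apply: eq_bigr => c _; rewrite mxE.
have hint : V i j ^+ 2 <= ((M%:Z) ^+ 2 *+ d) ^+ d.
  case: (boolP [exists a, piv a == i]) => [/existsP [a /eqP <-]|hnp].
    apply: (bound_piv hpiv hmono hpos hleft hWC hB hr).
    by have := @leq_card _ _ piv (piv_inj hmono); rewrite !card_ord.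
  apply: (bound_nonpiv hpiv hmono hpos hleft hWC hB hr).
  have hni : i \notin [set piv a | a in 'I_k].
    apply/imsetP => [[a _ e]]; move/negP: hnp; apply; apply/existsP; exists a.
    by rewrite e.
  have := max_card (mem (i |: [set piv a | a in 'I_k])).
  by rewrite cardsU1 hni card_imset ?card_ord //; exact: piv_inj hmono.
have hB0 : 0 <= Num.sqrt (d%:R) * D%:R * m%:R :> R.
  by rewrite !mulr_ge0 ?ler0n ?sqrtr_ge0.
rewrite -ler_sqr ?nnegrE ?exprn_ge0 ?ler0z ?normr_ge0 //.
rewrite -exprM mulnC exprM.
have hDM : M = (D * m)%N by rewrite /M hD mulnC.
have eB : (Num.sqrt (d%:R) * D%:R * m%:R) ^+ 2 = (((M%:Z) ^+ 2 *+ d)%:~R : R).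
  rewrite !exprMn sqr_sqrtr ?ler0n // rmorphMn /= rmorphXn /= -[((M%:Z)%:~R : R)]/(M%:R : R).
  by rewrite hDM natrM exprMn -[in RHS]mulr_natl; ring.
rewrite eB -[X in _ <= X]rmorphXn /= -[X in X <= _]rmorphXn /= ler_int.
by rewrite sq_le'.
Qed.
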